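(* Consider Algorithm SS-SQP (described in the context) under the standing assumptions (A1), (A2). Let $\kappa_l>0$ be a constant such that for all $k$, $\Delta l(x_k,\bar\tau_k,\bar g_k,\bar d_k)\ge\kappa_l\bar\tau_k(\|\bar d_k\|^2+\|c_k\|)$ and $\Delta l(x_k,\tau_k,\nabla f_k,d_k)\ge\kappa_l\tau_k(\|d_k\|^2+\|c_k\|)$ (such a constant exists). Then for all $k\in\mathbb{N}$: (1) if $\|\bar g_k-\nabla f_k\|\le\kappa_{\mathrm{FO}}\alpha_k\sqrt{\Delta l(x_k,\bar\tau_k,\bar g_k,\bar d_k)}$, then $$|\nabla f_k^Td_k-\bar g_k^T\bar d_k|\le\left(\frac{(1+\kappa_H\zeta^{-1})\kappa_{\mathrm{FO}}\alpha_k}{\sqrt{\kappa_l\bar\tau_k}}+\frac{\kappa_{\mathrm{FO}}^2\alpha_k^2}{\zeta}\right)\Delta l(x_k,\bar\tau_k,\bar g_k,\bar d_k)$$ and $$|d_k^TH_kd_k-\bar d_k^TH_k\bar d_k|\le\left(\frac{2\kappa_H\zeta^{-1}\kappa_{\mathrm{FO}}\alpha_k}{\sqrt{\kappa_l\bar\tau_k}}+\frac{\kappa_H\kappa_{\mathrm{FO}}^2\alpha_k^2}{\zeta^2}\right)\Delta l(x_k,\bar\tau_k,\bar g_k,\bar d_k);$$ (2) if $\|\bar g_k-\nabla f_k\|\le\epsilon_g$, then $$|\nabla f_k^Td_k-\bar g_k^T\bar d_k|\le\frac{(1+\kappa_H\zeta^{-1})\epsilon_g}{\sqrt{\kappa_l\tau_k}}\sqrt{\Delta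 l(x_k,\tau_k,\nabla f_k,d_k)}+\zeta^{-1}\epsilon_g^2$$ and $$|d_k^TH_kd_k-\bar d_k^TH_k\bar d_k|\le\frac{2\kappa_H\zeta^{-1}\epsilon_g}{\sqrt{\kappa_l\tau_k}}\sqrt{\Delta l(x_k,\tau_k,\nabla f_k,d_k)}+\kappa_H\zeta^{-2}\epsilon_g^2.$$
   Context: Problem: $\min_{x\in\mathbb{R}^n}f(x)$ s.t. $c(x)=0$ with $f,c$ continuously differentiable, $c:\mathbb{R}^n\to\mathbb{R}^m$, $m\le n$; $\nabla f_k=\nabla f(x_k)$, $c_k=c(x_k)$, $J_k=\nabla c(x_k)^T$; $\|\cdot\|$ Euclidean norm. $\Delta l(x,\tau,g,d)=-\tau g^Td+\|c(x)\|_1$. $\kappa_{\mathrm{FO}},\epsilon_g\ge0$ are constants (first-order oracle parameters). Standing assumption (A1): there is an open convex set $\mathcal{X}$ containing all iterates and trial iterates; $f$ bounded below, $\nabla f$ $L$-Lipschitz and bounded, $c$ bounded, each $\nabla c_i$ Lipschitz and bounded on $\mathcal{X}$; singular values of $\nabla c(x)^T$ bounded away from zero on $\mathcal{X}$. (A2): $H_k$ symmetric, chosen independently of $\bar g_k$, $\|H_k\|\le\kappa_H$, $u^TH_ku\ge\zeta\|u\|^2$ for $u\in\mathrm{Null}(J_k)$, $\kappa_H,\zeta>0$. Algorithm SS-SQP: inputs $x_0$, $\bar\tau_{-1}>0$, $\alpha_{\max}\in(0,1]$, $\alpha_0\in(0,\alpha_{\max}]$, $\epsilon_f\ge0$, $\gamma,\theta,\sigma,\epsilon_\tau\in(0,1)$.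 At iteration $k$: random gradient estimate $\bar g_k$; solve $\begin{bmatrix}H_k & J_k^T\\ J_k&0\end{bmatrix}\begin{bmatrix}\bar d_k\\ \bar y_k\end{bmatrix}=-\begin{bmatrix}\bar g_k\\ c_k\end{bmatrix}$; $\bar\tau_k^{\rm trial}=\infty$ if $\bar g_k^T\bar d_k+\max\{\bar d_k^TH_k\bar d_k,0\}\le0$, else $(1-\sigma)\|c_k\|_1/(\bar g_k^T\bar d_k+\max\{\bar d_k^TH_k\bar d_k,0\})$; $\bar\tau_k=\bar\tau_{k-1}$ if $\bar\tau_{k-1}\le\bar\tau_k^{\rm trial}$, else $\min\{(1-\epsilon_\tau)\bar\tau_{k-1},\bar\tau_k^{\rm trial}\}$; $x_k^+=x_k+\alpha_k\bar d_k$; with objective estimates $\bar f$ and $\bar\phi(x,\tau;\xi)=\tau\bar f(x;\xi)+\|c(x)\|_1$, set $x_{k+1}=x_k^+$, $\alpha_{k+1}=\min\{\alpha_{\max},\alpha_k/\gamma\}$ if $\bar\phi(x_k^+,\bar\tau_k;\xi_k^+)\le\bar\phi(x_k,\bar\tau_k;\xi_k^0)-\alpha_k\theta\Delta l(x_k,\bar\tau_k,\bar g_k,\bar d_k)+2\bar\tau_k\epsilon_f$, else $x_{k+1}=x_k$, $\alpha_{k+1}=\gamma\alpha_k$. Deterministic quantities: $(d_k,y_k)$ solves the same system with $\bar g_k$ replaced by $\nabla f_k$; $\tau_k^{\rm trial}=\infty$ if $\nabla f_k^Td_k+\max\{d_k^TH_kd_k,0\}\le0$, else $(1-\sigma)\|c_k\|_1/(\nabla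 f_k^Td_k+\max\{d_k^TH_kd_k,0\})$; $\tau_k=\bar\tau_k$ if $\bar\tau_k\le\tau_k^{\rm trial}$, else $\tau_k=\min\{(1-\epsilon_\tau)\bar\tau_k,\tau_k^{\rm trial}\}$. *)

(* Defs.v *)
From HB Require Import structures.
From mathcomp Require Import all_boot all_order all_algebra.
From mathcomp Require Import all_classical all_reals all_analysis.
Set Implicit Arguments.
Unset Strict Implicit.
Unset Printing Implicit Defensive.
Import Order.TTheory GRing.Theory Num.Theory.
Import numFieldNormedType.Exports.
Local Open Scope ring_scope.
Local Open Scope classical_set_scope.

Definition dotv (R : realType) (n : nat) (u v : 'cV[R]_n) : R :=
  \sum_(i < n) u i 0 * v i 0.

Definition enorm (R : realType) (n : nat) (u : 'cV[R]_n) : R :=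
  Num.sqrt (dotv u u).

Definition norm1 (R : realType) (n : nat) (u : 'cV[R]_n) : R :=
  \sum_(i < n) `|u i 0|.

Definition Delta_l (R : realType) (m n : nat) (c : 'cV[R]_n -> 'cV[R]_m)
  (x : 'cV[R]_n) (tau : R) (g d : 'cV[R]_n) : R :=
  - tau * dotv g d + norm1 (c x).

(* trial merit parameter; None encodes +infinity *)
Definition tau_trial (R : realType) (n : nat) (sigma : R) (g d : 'cV[R]_n)
  (H : 'M[R]_n) (c1 : R) : option R :=
  let den := dotv g d + Num.max (dotv d (H *m d)) 0 in
  if den <= 0 then None else Some ((1 - sigma) * c1 / den).

Definition tau_update (R : realType) (eps_tau prev : R) (t : option R) : R :=
  match t with
  | None => prev
  | Some t => if prev <= t then prev else Num.min ((1 - eps_tau) * prev) t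
  end.

Definition is_gradient (R : realType) (n : nat) (f : 'cV[R]_n -> R)
  (gf : 'cV[R]_n -> 'cV[R]_n) : Prop :=
  forall x, differentiable f x /\ forall h, 'd f x h = dotv (gf x) h.

Definition is_jacobian (R : realType) (m n : nat) (c : 'cV[R]_n -> 'cV[R]_m)
  (Jc : 'cV[R]_n -> 'M[R]_(m, n)) : Prop :=
  forall x, differentiable c x /\ forall h, 'd c x h = Jc x *m h.

Definition convex_set (R : realType) (n : nat) (X : set 'cV[R]_n) : Prop :=
  forall a b, X a -> X b -> forall t : R, 0 <= t <= 1 -> X ((1 - t) *: a + t *: b).

(* Main.v *)
Require Import Defs.
From HB Require Import structures.
From mathcomp Require Import all_boot all_order all_algebra.
From mathcomp Require Import all_classical all_reals all_analysis.
From mathcomp Require Import ring lra.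
Set Implicit Arguments.
Unset Strict Implicit.
Import Order.TTheory GRing.Theory Num.Theory.
Import numFieldNormedType.Exports.
Local Open Scope ring_scope.
Local Open Scope classical_set_scope.

Section H.
Variable R : realType.

Lemma dotvC n (u v : 'cV[R]_n) : dotv u v = dotv v u.
Proof. by rewrite /dotv; apply eq_bigr => i _; rewrite mulrC. Qed.

Lemma dotvDl n (u w v : 'cV[R]_n) : dotv (u + w) v = dotv u v + dotv w v.
Proof. by rewrite /dotv -big_split; apply eq_bigr => i _; rewrite !mxE mulrDl. Qed.

Lemma dotvNl n (u v : 'cV[R]_n) : dotv (- u) v = - dotv u v.
Proof. by rewrite /dotv -sumrN; apply eq_bigr => i _; rewrite !mxE mulNr. Qed.

Lemma dotvBl n (u w v : 'cV[R]_n) : dotv (u - w) v = dotv u v - dotv w v.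
Proof. by rewrite dotvDl dotvNl. Qed.

Lemma dotvZl n a (u v : 'cV[R]_n) : dotv (a *: u) v = a * dotv u v.
Proof. by rewrite /dotv mulr_sumr; apply eq_bigr => i _; rewrite !mxE mulrA. Qed.

Lemma dotvDr n (u w v : 'cV[R]_n) : dotv v (u + w) = dotv v u + dotv v w.
Proof. by rewrite !(dotvC v) dotvDl. Qed.
Lemma dotvBr n (u w v : 'cV[R]_n) : dotv v (u - w) = dotv v u - dotv v w.
Proof. by rewrite !(dotvC v) dotvBl. Qed.
Lemma dotvNr n (u v : 'cV[R]_n) : dotv v (- u) = - dotv v u.
Proof. by rewrite !(dotvC v) dotvNl. Qed.
Lemma dotvZr n a (u v : 'cV[R]_n) : dotv v (a *: u) = a * dotv v u.
Proof. by rewrite !(dotvC v) dotvZl. Qed.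

Lemma dotv0r n (u : 'cV[R]_n) : dotv u 0 = 0.
Proof. by rewrite /dotv big1 // => i _; rewrite mxE mulr0. Qed.

Lemma dotvE n (u v : 'cV[R]_n) : dotv u v = (u^T *m v) 0 0.
Proof. by rewrite mxE /dotv; apply eq_bigr => i _; rewrite mxE. Qed.

Lemma dotv_mul p q (A : 'M[R]_(p, q)) (u : 'cV[R]_q) (v : 'cV[R]_p) :
  dotv (A *m u) v = dotv u (A^T *m v).
Proof. by rewrite !dotvE trmx_mul mulmxA. Qed.

Lemma dotv_ge0 n (u : 'cV[R]_n) : 0 <= dotv u u.
Proof. by rewrite /dotv; apply: sumr_ge0 => i _; rewrite -expr2 sqr_ge0. Qed.

Lemma enorm_ge0 n (u : 'cV[R]_n) : 0 <= enorm u.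
Proof. exact: sqrtr_ge0. Qed.

Lemma enorm_sqr n (u : 'cV[R]_n) : enorm u ^+ 2 = dotv u u.
Proof. by rewrite sqr_sqrtr // dotv_ge0. Qed.

Lemma dotv_zero n (u v : 'cV[R]_n) : dotv v v = 0 -> dotv u v = 0.
Proof.
move=> h; rewrite /dotv big1 // => i _.
have hp : forall j : 'I_n, xpredT j -> 0 <= v j 0 * v j 0.
  by move=> j _; rewrite -expr2 sqr_ge0.
have /eqP := @psumr_eq0P R _ xpredT (fun j : 'I_n => v j 0 * v j 0) hp h i isT.
by rewrite mulf_eq0 orbb => /eqP ->; rewrite mulr0.
Qed.

Lemma CS n (u v : 'cV[R]_n) : `|dotv u v| <= enorm u * enorm v.
Proof.
rewrite /enorm -sqrtrM ?dotv_ge0 // -sqrtr_sqr ler_sqrt; last first.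
  by apply: mulr_ge0; apply: dotv_ge0.
set a := dotv u u; set b := dotv v v; set c := dotv u v.
have hb : 0 <= b by apply: dotv_ge0.
have ha : 0 <= a by apply: dotv_ge0.
have q : 0 <= dotv (b *: u - c *: v) (b *: u - c *: v) by apply: dotv_ge0.
rewrite !(dotvBl, dotvBr, dotvZl, dotvZr) -/a -/b -/c (dotvC v u) -/c in q.
have {}q : 0 <= b * (a * b - c ^+ 2).
  by have -> : b * (a * b - c ^+ 2) = b * (b * a - c * c) - c * (b * c - c * b) by ring.
have [b0|bpos] := eqVneq b 0.
  by rewrite /c (dotv_zero u b0) b0; lra.
have bp : 0 < b by rewrite lt_neqAle eq_sym bpos hb.
rewrite pmulr_rge0 // in q; lra.
Qed.

Lemma norm1_ge0 m (v : 'cV[R]_m) : 0 <= norm1 v.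
Proof. by apply: sumr_ge0 => i _. Qed.

Lemma norm1_eq0 m (v : 'cV[R]_m) : norm1 v = 0 -> v = 0.
Proof.
move=> h; apply/matrixP => i j; rewrite (ord1 j) [RHS]mxE.
have hp : forall j : 'I_m, xpredT j -> 0 <= `|v j 0| by [].
have /eqP := @psumr_eq0P R _ xpredT (fun j : 'I_m => `|v j 0|) hp h i isT.
by rewrite normr_eq0 => /eqP.
Qed.

Lemma trial_pos m n (sigma zeta : R) (g db : 'cV[R]_n) (Hk : 'M[R]_n)
  (J : 'M[R]_(m, n)) (yb cx : 'cV[R]_m) s :
  0 < sigma < 1 -> Hk^T = Hk ->
  Hk *m db + J^T *m yb = - g -> J *m db = - cx ->
  (forall u, J *m u = 0 -> zeta * enorm u ^+ 2 <= dotv u (Hk *m u)) ->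
  0 < zeta ->
  tau_trial sigma g db Hk (norm1 cx) = Some s -> 0 < s.
Proof.
move=> /andP[s0 s1] HT sys1 sys2 curv z0; rewrite /tau_trial.
case: ifP => hden // [<-].
have dpos : 0 < dotv g db + Num.max (dotv db (Hk *m db)) 0.
  by rewrite ltNge hden.
have [c0|cpos] := eqVneq (norm1 cx) 0; last first.
  apply: divr_gt0 => //; apply: mulr_gt0; first by lra.
  by rewrite lt_neqAle eq_sym cpos norm1_ge0.
exfalso.
have cx0 := norm1_eq0 c0.
have Jd : J *m db = 0 by rewrite sys2 cx0 oppr0.
have hq := curv _ Jd.
have hq0 : 0 <= dotv db (Hk *m db).
  apply: le_trans hq; apply: mulr_ge0; first by lra.
  exact: sqr_ge0.
have gE : g = - (Hk *m db + J^T *m yb) by rewrite sys1 opprK.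
have : dotv g db = - dotv db (Hk *m db).
  rewrite gE dotvNl dotvDl !dotv_mul HT trmxK Jd dotv0r addr0.
  by rewrite dotvC.
move=> hg; move: dpos; rewrite hg max_l //; lra.
Qed.

Lemma tau_update_pos (eps prev : R) t :
  0 < eps < 1 -> 0 < prev -> (forall s, t = Some s -> 0 < s) ->
  0 < tau_update eps prev t.
Proof.
move=> /andP[e0 e1] p0; case: t => [s|] //= hs.
case: ifP => // _; rewrite lt_min (hs s) // andbT; apply: mulr_gt0 => //; lra.
Qed.

Lemma CSH n (Hk : 'M[R]_n) kH (a b : 'cV[R]_n) :
  (forall u, enorm (Hk *m u) <= kH * enorm u) ->
  `|dotv a (Hk *m b)| <= enorm a * (kH * enorm b).
Proof.
move=> hH; apply: le_trans (CS _ _) _; apply: ler_wpM2l; first exact: enorm_ge0.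
exact: hH.
Qed.

Lemma key m n (Hk : 'M[R]_n) (J : 'M[R]_(m, n)) (g gb u db : 'cV[R]_n)
  (y yb cx : 'cV[R]_m) kH z :
  Hk^T = Hk -> (forall u, enorm (Hk *m u) <= kH * enorm u) ->
  (forall u, J *m u = 0 -> z * enorm u ^+ 2 <= dotv u (Hk *m u)) -> 0 < z ->
  Hk *m (db + u) + J^T *m y = - g -> J *m (db + u) = - cx ->
  Hk *m db + J^T *m yb = - gb -> J *m db = - cx ->
  [/\ enorm u <= enorm (gb - g) / z,
   `|dotv g (db + u) - dotv gb db| <= enorm (gb - g) * enorm db + enorm db * (kH * enorm u) + enorm (gb - g) * enorm u,
   `|dotv g (db + u) - dotv gb db| <= enorm (gb - g) * enorm (db + u) + enorm (db + u) * (kH * enorm u) + enorm (gb - g) * enorm u,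
   `|dotv (db + u) (Hk *m (db + u)) - dotv db (Hk *m db)| <= 2 * (enorm db * (kH * enorm u)) + enorm u * (kH * enorm u)
   & `|dotv (db + u) (Hk *m (db + u)) - dotv db (Hk *m db)| <= 2 * (enorm (db + u) * (kH * enorm u)) + enorm u * (kH * enorm u)].
Proof.
move=> HT hH curv z0 s1 s2 s3 s4.
have Ju : J *m u = 0.
  by have := s2; rewrite mulmxDr s4 => h; rewrite -[J *m u](addKr (- cx)) h addNr.
have gE : g = - (Hk *m (db + u) + J^T *m y) by rewrite s1 opprK.
have gbE : gb = - (Hk *m db + J^T *m yb) by rewrite s3 opprK.
have F1 : dotv gb u = - dotv db (Hk *m u).
  by rewrite gbE dotvNl dotvDl !dotv_mul HT trmxK Ju dotv0r addr0.
have F2 : dotv g u = - dotv (db + u) (Hk *m u).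
  by rewrite gE dotvNl [dotv (_ + _) u]dotvDl !dotv_mul HT trmxK Ju dotv0r addr0.
have sym : dotv u (Hk *m db) = dotv db (Hk *m u).
  by rewrite dotvC dotv_mul HT.
have hq := curv _ Ju.
have hCS1 := CS (gb - g) db.
have hCS2 := CS (gb - g) (db + u).
have hCS3 := CS (gb - g) u.
have hH1 := CSH db u hH.
have hH2 := CSH (db + u) u hH.
have hH3 := CSH u u hH.
have nu0 : 0 <= enorm u by apply: enorm_ge0.
have nd0 : 0 <= enorm db by apply: enorm_ge0.
have nd1 : 0 <= enorm (db + u) by apply: enorm_ge0.
have er0 : 0 <= enorm (gb - g) by apply: enorm_ge0.
move: hCS1 hCS2 hCS3 hH1 hH2 hH3 hq.
set nu := enorm u; set nd := enorm db; set nd' := enorm (db + u); set er := enorm (gb - g).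
rewrite !(dotvBl, dotvDl, dotvDr, mulmxDr) F1 F2 sym !(dotvBl, dotvDl, dotvDr, mulmxDr) in nu0 *.
set A := dotv g db; set C := dotv gb db; set P := dotv db (Hk *m u); set Q := dotv u (Hk *m u).
set M := dotv db (Hk *m db).
move=> /ler_normlP[c1 c1'] /ler_normlP[c2 c2'] /ler_normlP[c3 c3'].
move=> /ler_normlP[h1 h1'] /ler_normlP[h2 h2'] /ler_normlP[h3 h3'] hq.
have nu0' : 0 <= nu := nu0.
have nd0' : 0 <= nd := nd0.
have nd1' : 0 <= nd' := nd1.
have er0' : 0 <= er := er0.
have hQ : z * nu ^+ 2 <= er * nu by lra.
split; try (apply/ler_normlP; split; lra).
have [->|nupos] := eqVneq nu 0; first by apply: divr_ge0 => //; exact: ltW.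
have nup : 0 < nu by rewrite lt_neqAle eq_sym nupos nu0'.
rewrite ler_pdivlMr // mulrC -(ler_pM2r nup) -mulrA -expr2; lra.
Qed.

Lemma nd_bound (D kl t nd nc : R) : 0 < kl -> 0 < t -> 0 <= nd -> 0 <= nc ->
  kl * t * (nd ^+ 2 + nc) <= D -> nd <= Num.sqrt D / Num.sqrt (kl * t).
Proof.
move=> k0 t0 n0 c0 h.
have kt : 0 < kl * t by apply: mulr_gt0.
rewrite ler_pdivlMr ?sqrtr_gt0 //.
rewrite -[nd](ger0_norm n0) -sqrtr_sqr -sqrtrM ?sqr_ge0 // ler_sqrt; last by nra.
nra.
Qed.

Lemma mono (er E nd Dd nu N kH : R) : 0 <= er <= E -> 0 <= nd <= Dd -> 0 <= nu <= N -> 0 <= kH ->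
 er * nd + nd * (kH * nu) + er * nu <= E * Dd + Dd * (kH * N) + E * N /\
 2 * (nd * (kH * nu)) + nu * (kH * nu) <= 2 * (Dd * (kH * N)) + N * (kH * N).
Proof.
move=> /andP[e0 e1] /andP[n0 n1] /andP[u0 u1] k0.
have a1 : er * nd <= E * Dd by apply: ler_pM.
have a2 : kH * nu <= kH * N by apply: ler_wpM2l.
have a3 : nd * (kH * nu) <= Dd * (kH * N) by apply: ler_pM => //; apply: mulr_ge0.
have a4 : er * nu <= E * N by apply: ler_pM.
have a5 : nu * (kH * nu) <= N * (kH * N) by apply: ler_pM => //; apply: mulr_ge0.
split; lra.
Qed.
End H.

Theorem lemma3p16 (R : realType) (m n : nat) (Hmn : (m <= n)%N)
  (* problem data *)
  (f : 'cV[R]_n -> R) (gf : 'cV[R]_n -> 'cV[R]_n)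
  (c : 'cV[R]_n -> 'cV[R]_m) (Jc : 'cV[R]_n -> 'M[R]_(m, n))
  (* algorithm inputs *)
  (x0 : 'cV[R]_n) (taub_init alpha_max alpha0 eps_f gamma theta sigma eps_tau : R)
  (* oracle constants *)
  (kappa_FO eps_g : R)
  (* constants of (A2) and kappa_l *)
  (kappa_H zeta kappa_l : R)
  (* iterates and algorithm quantities (one realization) *)
  (x : nat -> 'cV[R]_n) (alpha : nat -> R)
  (gb : nat -> 'cV[R]_n) (H : nat -> 'M[R]_n)
  (db : nat -> 'cV[R]_n) (yb : nat -> 'cV[R]_m) (taub : nat -> R)
  (fb0 fbp : nat -> R)
  (* deterministic quantities *)
  (d : nat -> 'cV[R]_n) (y : nat -> 'cV[R]_m) (tau : nat -> R)
  (X : set 'cV[R]_n) :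
  (* parameter ranges *)
  0 < taub_init -> 0 < alpha_max <= 1 -> 0 < alpha0 <= alpha_max -> 0 <= eps_f ->
  0 < gamma < 1 -> 0 < theta < 1 -> 0 < sigma < 1 -> 0 < eps_tau < 1 ->
  0 <= kappa_FO -> 0 <= eps_g ->
  (* (A1) *)
  is_gradient f gf -> continuous gf ->
  is_jacobian c Jc -> continuous Jc ->
  open X -> convex_set X ->
  (forall k, X (x k) /\ X (x k + alpha k *: db k)) ->
  (exists flow : R, forall z, X z -> flow <= f z) ->
  (exists L : R, forall z w, X z -> X w -> enorm (gf z - gf w) <= L * enorm (z - w)) ->
  (exists B : R, forall z, X z -> enorm (gf z) <= B) ->
  (exists B : R, forall z, X z -> enorm (c z) <= B) ->
  (forall i : 'I_m, exists L : R, forall z w, X z -> X w ->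
      enorm ((row i (Jc z))^T - (row i (Jc w))^T) <= L * enorm (z - w)) ->
  (forall i : 'I_m, exists B : R, forall z, X z -> enorm ((row i (Jc z))^T) <= B) ->
  (exists s : R, 0 < s /\ forall z, X z -> forall v : 'cV[R]_m,
      s * enorm v <= enorm ((Jc z)^T *m v)) ->
  (* (A2) *)
  0 < kappa_H -> 0 < zeta ->
  (forall k, (H k)^T = H k) ->
  (forall k (u : 'cV[R]_n), enorm (H k *m u) <= kappa_H * enorm u) ->
  (forall k (u : 'cV[R]_n), Jc (x k) *m u = 0 ->
      zeta * enorm u ^+ 2 <= dotv u (H k *m u)) ->
  (* Algorithm SS-SQP *)
  x 0%N = x0 -> alpha 0%N = alpha0 ->
  (forall k, H k *m db k + (Jc (x k))^T *m yb k = - gb k /\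
             Jc (x k) *m db k = - c (x k)) ->
  (forall k, taub k = tau_update eps_tau
       (if k is k'.+1 then taub k' else taub_init)
       (tau_trial sigma (gb k) (db k) (H k) (norm1 (c (x k))))) ->
  (forall k, let xp := x k + alpha k *: db k in
     if taub k * fbp k + norm1 (c xp)
        <= taub k * fb0 k + norm1 (c (x k))
           - alpha k * theta * Delta_l c (x k) (taub k) (gb k) (db k)
           + 2 * taub k * eps_f
     then x k.+1 = xp /\ alpha k.+1 = Num.min alpha_max (alpha k / gamma)
     else x k.+1 = x k /\ alpha k.+1 = gamma * alpha k) ->
  (* deterministic quantities *)
  (forall k, H k *m d k + (Jc (x k))^T *m y k = - gf (x k) /\
             Jc (x k) *m d k = - c (x k)) ->
  (forall k, tau k = tau_update eps_tau (taub k)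
       (tau_trial sigma (gf (x k)) (d k) (H k) (norm1 (c (x k))))) ->
  (* the constant kappa_l *)
  0 < kappa_l ->
  (forall k, Delta_l c (x k) (taub k) (gb k) (db k)
               >= kappa_l * taub k * (enorm (db k) ^+ 2 + enorm (c (x k)))) ->
  (forall k, Delta_l c (x k) (tau k) (gf (x k)) (d k)
               >= kappa_l * tau k * (enorm (d k) ^+ 2 + enorm (c (x k)))) ->
  forall k : nat,
  let Dlb := Delta_l c (x k) (taub k) (gb k) (db k) in
  let Dl := Delta_l c (x k) (tau k) (gf (x k)) (d k) in
  let err := enorm (gb k - gf (x k)) in
  (err <= kappa_FO * alpha k * Num.sqrt Dlb ->
     `|dotv (gf (x k)) (d k) - dotv (gb k) (db k)|
       <= ((1 + kappa_H / zeta) * kappa_FO * alpha k / Num.sqrt (kappa_l * taub k)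
           + kappa_FO ^+ 2 * alpha k ^+ 2 / zeta) * Dlb
     /\
     `|dotv (d k) (H k *m d k) - dotv (db k) (H k *m db k)|
       <= (2 * kappa_H / zeta * kappa_FO * alpha k / Num.sqrt (kappa_l * taub k)
           + kappa_H * kappa_FO ^+ 2 * alpha k ^+ 2 / zeta ^+ 2) * Dlb)
  /\
  (err <= eps_g ->
     `|dotv (gf (x k)) (d k) - dotv (gb k) (db k)|
       <= (1 + kappa_H / zeta) * eps_g / Num.sqrt (kappa_l * tau k) * Num.sqrt Dl
          + eps_g ^+ 2 / zeta
     /\
     `|dotv (d k) (H k *m d k) - dotv (db k) (H k *m db k)|
       <= 2 * kappa_H / zeta * eps_g / Num.sqrt (kappa_l * tau k) * Num.sqrt Dl
          + kappa_H * eps_g ^+ 2 / zeta ^+ 2).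
Proof.
move=> htau0 halpha halpha0 hepsf hgamma htheta hsigma heps hkFO hepsg hgrad hgc
  hjac hJc hopen hconv hX hflow hL hB hcB hJL hJB hsing hkH hz HT hHb hcurv hx0 ha0
  sysb htaub hstep sysd htau hkl hDlb hDl.
have taub_pos : forall k, 0 < taub k.
  elim=> [|k IH]; rewrite htaub; apply: tau_update_pos => // s;
  exact: (trial_pos hsigma (HT _) (sysb _).1 (sysb _).2 (hcurv _) hz).
have tau_pos : forall k, 0 < tau k.
  move=> k; rewrite htau; apply: tau_update_pos => // s.
  exact: (trial_pos hsigma (HT _) (sysd _).1 (sysd _).2 (hcurv _) hz).
move=> k Dlb Dl err.
have dE : db k + (d k - db k) = d k by rewrite addrC subrK.
have s1 : H k *m (db k + (d k - db k)) + (Jc (x k))^T *m y k = - gf (x k)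
  by rewrite dE; exact: (sysd k).1.
have s2 : Jc (x k) *m (db k + (d k - db k)) = - c (x k)
  by rewrite dE; exact: (sysd k).2.
have [K1 K2 K3 K4 K5] := key (HT k) (hHb k) (hcurv k) hz s1 s2 (sysb k).1 (sysb k).2.
rewrite !dE -/err in K1 K2 K3 K4 K5.
have err0 : 0 <= err by apply: enorm_ge0.
have nu0 : 0 <= enorm (d k - db k) by apply: enorm_ge0.
have ndb0 : 0 <= enorm (db k) by apply: enorm_ge0.
have nd0 : 0 <= enorm (d k) by apply: enorm_ge0.
have nc0 : 0 <= enorm (c (x k)) by apply: enorm_ge0.
have tb := taub_pos k.
have tp := tau_pos k.
have Dlb0 : 0 <= Dlb.
  apply: le_trans (hDlb k); apply: mulr_ge0; first by apply: mulr_ge0; exact: ltW.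
  by apply: addr_ge0 => //; apply: sqr_ge0.
have Dl0 : 0 <= Dl.
  apply: le_trans (hDl k); apply: mulr_ge0; first by apply: mulr_ge0; exact: ltW.
  by apply: addr_ge0 => //; apply: sqr_ge0.
have sbp : 0 < Num.sqrt (kappa_l * taub k) by rewrite sqrtr_gt0 mulr_gt0.
have sp : 0 < Num.sqrt (kappa_l * tau k) by rewrite sqrtr_gt0 mulr_gt0.
have Bdb := nd_bound hkl tb ndb0 nc0 (hDlb k).
have Bd := nd_bound hkl tp nd0 nc0 (hDl k).
have zi : 0 <= zeta^-1 by rewrite invr_ge0 ltW.
split.
  move=> herr.
  set r := Num.sqrt Dlb in herr Bdb.
  set s := Num.sqrt (kappa_l * taub k) in Bdb sbp *.
  set E := kappa_FO * alpha k * r in herr.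
  have hN : enorm (d k - db k) <= E / zeta.
    by apply: le_trans K1 _; apply: ler_wpM2r.
  have [m1 m2] := mono (er:=err) (E:=E) (nd:=enorm (db k)) (Dd:=r/s)
     (nu:=enorm (d k - db k)) (N:=E/zeta) (kH:=kappa_H)
     (introT andP (conj err0 herr)) (introT andP (conj ndb0 Bdb))
     (introT andP (conj nu0 hN)) (ltW hkH).
  have rr : Dlb = r ^+ 2 by rewrite sqr_sqrtr.
  have sn : s != 0 by rewrite gt_eqF.
  have zn : zeta != 0 by rewrite gt_eqF.
  split.
    apply: le_trans K2 _; apply: le_trans m1 _.
    by rewrite rr /E le_eqVlt; apply/orP; left; apply/eqP; field; rewrite ?sn ?zn.
  apply: le_trans K4 _; apply: le_trans m2 _.
  by rewrite rr /E le_eqVlt; apply/orP; left; apply/eqP; field; rewrite ?sn ?zn.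
move=> herr.
set r := Num.sqrt Dl in Bd *.
set s := Num.sqrt (kappa_l * tau k) in Bd sp *.
have hN : enorm (d k - db k) <= eps_g / zeta.
  by apply: le_trans K1 _; apply: ler_wpM2r.
have [m1 m2] := mono (er:=err) (E:=eps_g) (nd:=enorm (d k)) (Dd:=r/s)
   (nu:=enorm (d k - db k)) (N:=eps_g/zeta) (kH:=kappa_H)
   (introT andP (conj err0 herr)) (introT andP (conj nd0 Bd))
   (introT andP (conj nu0 hN)) (ltW hkH).
have sn : s != 0 by rewrite gt_eqF.
have zn : zeta != 0 by rewrite gt_eqF.
split.
  apply: le_trans K3 _; apply: le_trans m1 _.
  by rewrite le_eqVlt; apply/orP; left; apply/eqP; field; rewrite ?sn ?zn.
apply: le_trans K5 _; apply: le_trans m2 _.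
by rewrite le_eqVlt; apply/orP; left; apply/eqP; field; rewrite ?sn ?zn.
Qed.
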